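(* Let $(\Omega,\mathcal{F},\mathbb{P})$ be a probability space, let $d\in\mathbb{N}$, $\eta\in(0,1)$, let $X_n\colon\Omega\to\mathbb{R}^d$, $n\in\mathbb{N}$, be i.i.d. random variables with $\mathbb{E}[\|X_1\|]<\infty$, let $A=\{\sum_{n=1}^\infty\eta(1-\eta)^{n-1}\|X_n\|<\infty\}$, and let $\chi\colon\Omega\to\mathbb{R}^d$ be a random variable satisfying $\chi(\omega)=\sum_{n=1}^\infty\eta(1-\eta)^{n-1}X_n(\omega)$ for all $\omega\in A$. Then (i) $A\in\mathcal{F}$ and $\mathbb{P}(A)=1$, and (ii) $\operatorname{supp}(X_1)\subseteq\operatorname{supp}(\chi)$.
   Context: For a Borel measure $\mu$ on $\mathbb{R}^d$, $\operatorname{supp}(\mu)=\{x\in\mathbb{R}^d\colon\mu(B)>0\text{ for every open }B\ni x\}$. For a random variable $X$, $\operatorname{supp}(X)=\operatorname{supp}(\mathbb{P}_X)$ where $\mathbb{P}_X$ is the law of $X$. $\|\cdot\|$ is the Euclidean norm. *)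

(* Defs.v *)
(* R^d is modelled as row vectors 'rV[R]_d with the
   library's (product = Euclidean) topology. *)
From HB Require Import structures.
From mathcomp Require Import all_boot all_order all_algebra.
From mathcomp Require Import all_classical all_reals all_analysis.
Set Implicit Arguments. Unset Strict Implicit. Unset Printing Implicit Defensive.
Import Order.TTheory GRing.Theory Num.Theory.
Import numFieldNormedType.Exports.
Local Open Scope classical_set_scope.
Local Open Scope ring_scope.

Definition eucl_norm (R : realType) (d : nat) (v : 'rV[R]_d) : R :=
  Num.sqrt (\sum_(i < d) v ord0 i ^+ 2).

Definition borel_Rd (R : realType) (d : nat) : set (set 'rV[R]_d) :=
  <<s [set B : set 'rV[R]_d | open B] >>.

Definition is_rv_Rd d0 (T : measurableType d0) (R : realType) (d : nat)
  (X : T -> 'rV[R]_d) : Prop :=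
  forall B, borel_Rd B -> measurable (X @^-1` B).

Definition law d0 (T : measurableType d0) (R : realType) (P : probability T R)
  (d : nat) (X : T -> 'rV[R]_d) : set 'rV[R]_d -> \bar R :=
  fun B => P (X @^-1` B).

Definition supp (R : realType) (d : nat) (mu : set 'rV[R]_d -> \bar R)
  : set 'rV[R]_d :=
  [set x | forall B : set 'rV[R]_d, open B -> B x -> (0 < mu B)%E].

Definition mutually_independent d0 (T : measurableType d0) (R : realType)
  (P : probability T R) (d : nat) (X : nat -> T -> 'rV[R]_d) : Prop :=
  forall (s : seq nat) (B : nat -> set 'rV[R]_d),
    uniq s -> (forall n, n \in s -> borel_Rd (B n)) ->
    P (\big[setI/setT]_(n <- s) (X n @^-1` B n)) =
    (\prod_(n <- s) P (X n @^-1` B n))%E.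

Definition identically_distributed d0 (T : measurableType d0) (R : realType)
  (P : probability T R) (d : nat) (X : nat -> T -> 'rV[R]_d) : Prop :=
  forall n B, borel_Rd B -> law P (X n) B = law P (X 0%N) B.

Definition iid d0 (T : measurableType d0) (R : realType)
  (P : probability T R) (d : nat) (X : nat -> T -> 'rV[R]_d) : Prop :=
  (forall n, is_rv_Rd (X n)) /\ mutually_independent P X /\
  identically_distributed P X.

(* Main.v *)
Require Import Defs.
From HB Require Import structures.
From mathcomp Require Import all_boot all_order all_algebra.
From mathcomp Require Import all_classical all_reals all_analysis.
From mathcomp Require Import measurable_realfun.
From mathcomp Require Import ring lra.
Import Order.TTheory GRing.Theory Num.Theory.
Import numFieldNormedType.Exports.
Local Open Scope classical_set_scope.
Local Open Scope ring_scope.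
From HB Require Import structures.
From mathcomp Require Import all_boot all_order all_algebra.
From mathcomp Require Import all_classical all_reals all_analysis.
Import Order.TTheory GRing.Theory Num.Theory.
Import numFieldNormedType.Exports.
Local Open Scope classical_set_scope.
Local Open Scope ring_scope.
Lemma eucl_cont (R : realType) (d : nat) : continuous (@eucl_norm R d).
Proof.
move=> v; rewrite /eucl_norm.
apply: continuous_comp; last exact: sqrt_continuous.
apply: (@continuous_big R _ +%R 0 xpredT add_continuous _ (index_enum 'I_d) (fun i (w : 'rV[R]_d) => w ord0 i ^+ 2)) => // i _.
have -> : (fun w : 'rV[R]_d => w ord0 i ^+ 2) = (fun w => w ord0 i) \* (fun w => w ord0 i).
  by apply/funext => w /=; rewrite expr2.
move=> w; apply: continuousM; exact: coord_continuous.
Qed.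
From HB Require Import structures.
From mathcomp Require Import all_boot all_order all_algebra.
From mathcomp Require Import all_classical all_reals all_analysis.
Import Order.TTheory GRing.Theory Num.Theory.
Import numFieldNormedType.Exports.
Local Open Scope classical_set_scope.
Local Open Scope ring_scope.

Lemma eucl_ge0 (R : realType) d (v : 'rV[R]_d) : 0 <= eucl_norm v.
Proof. exact: sqrtr_ge0. Qed.

Lemma mx_le_eucl (R : realType) d (v : 'rV[R]_d) : `|v| <= eucl_norm v.
Proof.
rewrite [leLHS]/Num.Def.normr /= mx_normrE; apply: bigmax_le; first exact: eucl_ge0.
move=> [i j] _ /=; rewrite (ord1 i) -sqrtr_sqr /eucl_norm ler_sqrt; last first.
  by apply: sumr_ge0 => k _; exact: sqr_ge0.
by rewrite (bigD1 j) //= lerDl; apply: sumr_ge0 => k _; exact: sqr_ge0.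
Qed.

Lemma borel_open (R : realType) d (B : set 'rV[R]_d) : open B -> borel_Rd B.
Proof. by move=> oB; apply: sub_sigma_algebra. Qed.

Lemma borel_C (R : realType) d (B : set 'rV[R]_d) : borel_Rd B -> borel_Rd (~` B).
Proof. by move=> hB; rewrite -setTD; apply: sigma_algebraCD. Qed.

Lemma borel_lt (R : realType) d (a : R) : borel_Rd [set v : 'rV[R]_d | eucl_norm v < a].
Proof.
apply: borel_open.
have -> : [set v : 'rV[R]_d | eucl_norm v < a] = (@eucl_norm R d) @^-1` [set x | x < a] by [].
by apply: (proj1 (continuousP _)) ; [exact: eucl_cont | exact: open_lt].
Qed.

Lemma borel_ge (R : realType) d (a : R) : borel_Rd [set v : 'rV[R]_d | a <= eucl_norm v].
Proof.
have -> : [set v : 'rV[R]_d | a <= eucl_norm v] = ~` [set v | eucl_norm v < a].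
  by apply/seteqP; split => v /=; rewrite leNgt => /negP.
apply: borel_C; exact: borel_lt.
Qed.

Lemma rv_eucl_meas d0 (T : measurableType d0) (R : realType) d (Y : T -> 'rV[R]_d) :
  is_rv_Rd Y -> measurable_fun setT (fun w => eucl_norm (Y w)).
Proof.
move=> hY; apply: (measurability _ (measurable_realfun.RGenOpens.measurableE R)).
move=> _ [_ [a [b ->]] <-]; rewrite setTI.
have -> : (fun w : T => eucl_norm (Y w)) @^-1` `]a, b[%classic = Y @^-1` ((@eucl_norm R d) @^-1` `]a, b[%classic) by [].
apply: hY; apply: borel_open.
by apply: (proj1 (continuousP _)) ; [exact: eucl_cont | exact: interval_open].
Qed.
Local Open Scope ereal_scope.

Lemma nneseries_le_cst (R : realType) (u : nat -> \bar R) (C : \bar R) :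
  (forall n, 0 <= u n) -> (forall k, \sum_(0 <= i < k) u i <= C) ->
  \sum_(0 <= i <oo) u i <= C.
Proof.
move=> u0 hk; apply: lime_le.
  by apply: is_cvg_nneseries => n _ _; exact: u0.
by near=> k; exact: hk.
Unshelve. all: by end_near.
Qed.

Lemma markov_le d0 (T : measurableType d0) (R : realType) (P : probability T R)
  (f : T -> R) (a e0 : R) : measurable_fun setT f -> (forall w, (0 <= f w)%R) ->
  (0 < a)%R -> \int[P]_w (f w)%:E = e0%:E ->
  P [set w | (a <= f w)%R] <= (e0 / a)%:E.
Proof.
move=> mf f0 a0 he.
have := @le_integral_comp_abse _ T R P setT measurableT (EFin \o f) a id
  (@measurable_id _ _ setT) (fun r h => h) (fun x y _ _ h => h) (proj2 (measurable_EFinP _ _) mf) a0.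
rewrite setTI /=.
have -> : [set x | a%:E <= `|f x|%:E] = [set w | (a <= f w)%R].
  by apply/seteqP; split => w /=; rewrite ger0_norm // lee_fin.
under eq_integral do rewrite ger0_norm //.
rewrite he => h.
rewrite -(@lee_pmul2l _ a%:E) ?lte_fin // (le_trans h) // -EFinM lee_fin.
by rewrite mulrCA divff ?mulr1 // gt_eqF.
Qed.

Lemma tail_bound d0 (T : measurableType d0) (R : realType) (P : probability T R)
  (F : nat -> set T) (E : set T) (c : R) (u : nat -> R) :
  measurable E -> (forall i, measurable (F i)) -> (forall i, 0 <= u i)%R ->
  (forall i, P (E `&` ~` F i) <= P E * (u i)%:E) ->
  (forall k, (\sum_(0 <= i < k) u i <= c)%R) ->
  P E <= P (E `&` \bigcap_i F i) + P E * c%:E.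
Proof.
move=> mE mF u0 hF hc.
have mG : measurable (\bigcap_i F i) by apply: bigcapT_measurable.
rewrite {1}(measureDI P mE mG) addeC; apply: leeD => //.
apply: (@le_trans _ _ (\sum_(0 <= i <oo) P (E `&` ~` F i))).
  apply: measure_sigma_subadditive.
  - by move=> i; apply: measurableI => //; apply: measurableC.
  - exact: measurableD.
  - move=> w [Ew /= nG]. 
    have [i nFi] : exists i, ~ F i w.
      by apply: contra_notP nG => h i; apply: contra_notP (h) => nFi; exists i.
    by exists i => //.
apply: (@le_trans _ _ (\sum_(0 <= i <oo) (P E * (u i)%:E))).
  by apply: lee_nneseries => // i _ _; apply: measure_ge0; apply: measurableI => //; apply: measurableC.
apply: nneseries_le_cst.
  by move=> n; apply: mule_ge0 => //; rewrite lee_fin.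
move=> k; rewrite -ge0_sume_distrr; last by move=> i _; rewrite lee_fin.
by rewrite sumEFin; apply: lee_pmul => //; rewrite lee_fin; [apply: sumr_ge0 => i _; exact: u0| exact: hc].
Qed.

Local Close Scope ereal_scope.

Lemma geo_id (R : realType) (y : R) k :
  (\sum_(0 <= i < k) y ^+ i) * (1 - y) = 1 - y ^+ k.
Proof.
elim: k => [|k IH]; first by rewrite big_geq // mul0r expr0 subrr.
rewrite big_nat_recr //= mulrDl IH exprS; ring.
Qed.

Lemma geo_le (R : realType) (y : R) k : 0 <= y < 1 ->
  \sum_(0 <= i < k) y ^+ i <= (1 - y)^-1.
Proof.
move=> /andP[y0 y1]; have h : 0 < 1 - y by rewrite subr_gt0.
rewrite -(@ler_pM2r _ (1 - y)) // mulVf ?gt_eqF // geo_id gerBl; exact: exprn_ge0.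
Qed.

Lemma geo_c (R : realType) (eta : R) N :
  \sum_(0 <= n < N) eta * (1 - eta) ^+ n = 1 - (1 - eta) ^+ N.
Proof.
have := @geo_id _ (1 - eta) N.
have -> : 1 - (1 - eta) = eta by rewrite opprB addrC subrK.
by move=> <-; rewrite mulrC mulr_sumr.
Qed.

Lemma ev_small (R : realType) (z K eps : R) : 0 <= z < 1 -> 0 < eps ->
  exists N0, forall N, (N0 <= N)%N -> K * z ^+ N <= eps.
Proof.
move=> /andP[z0 z1] e0.
have hz : `|z| < 1 by rewrite ger0_norm.
have := cvg_expr hz => /cvgr0Pnorm_lt /(_ (eps / (`|K| + 1))).
have hp : 0 < eps / (`|K| + 1) by rewrite divr_gt0 // ltr_pwDr.
move=> /(_ hp) [N0 _ hN0]; exists N0 => N hN.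
have := hN0 N hN; rewrite /= normrX ger0_norm // => h.
apply: (le_trans (ler_norm _)); rewrite normrM normrX (ger0_norm z0).
move: h; rewrite ltr_pdivlMr ?ltr_pwDr // => /ltW h.
apply: le_trans h; rewrite mulrC; apply: ler_wpM2l; first exact: exprn_ge0.
by rewrite lerDl.
Qed.

Lemma SM_bound (R : realType) d (eta dl K : R) (Y : nat -> 'rV[R]_d) (x : 'rV[R]_d) N M :
  0 < eta < 1 -> (N <= M)%N -> 0 <= dl ->
  (forall n, (n < N)%N -> `|x - Y n| <= dl) ->
  \sum_(0 <= i < M - N) eta * (1 - eta) ^+ (i + N) * `|Y (i + N)| <= K ->
  `|x - \sum_(0 <= n < M) (eta * (1 - eta) ^+ n) *: Y n| <= dl + K + (1 - eta) ^+ N * `|x|.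
Proof.
move=> /andP[e0 e1] NM dl0 hY hK.
have q0 : 0 <= 1 - eta by rewrite subr_ge0 ltW.
have c0 n : 0 <= eta * (1 - eta) ^+ n by rewrite mulr_ge0 ?exprn_ge0 // ltW.
rewrite (big_cat_nat (leq0n N) NM) /= -{2}(add0n N) big_addn.
have hx : x = \sum_(0 <= n < N) (eta * (1 - eta) ^+ n) *: x + (1 - eta) ^+ N *: x.
  by rewrite -scaler_suml geo_c -scalerDl subrK scale1r.
rewrite {1}hx.
set a := \sum_(0 <= n < N) _ *: x.
set b := \sum_(0 <= n < N) _ *: Y n.
set t := \sum_(0 <= i < M - N) _.
have hab : a - b = \sum_(0 <= n < N) (eta * (1 - eta) ^+ n) *: (x - Y n).
  by rewrite /a /b -sumrB; apply: eq_bigr => n _; rewrite scalerBr.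
rewrite opprD addrACA addrA addrAC hab.
apply: (le_trans (ler_normD _ _)); rewrite normrZ ger0_norm ?exprn_ge0 // lerD2r.
apply: (le_trans (ler_normB _ _)); apply: lerD.
  apply: (le_trans (ler_norm_sum _ _ _)).
  apply: (@le_trans _ _ (\sum_(0 <= n < N) (eta * (1 - eta) ^+ n) * dl)).
    rewrite big_nat_cond [X in _ <= X]big_nat_cond; apply: ler_sum => n /andP[/andP[_ hn] _].
    by rewrite normrZ ger0_norm // ler_wpM2l // hY.
  rewrite -mulr_suml geo_c.
  apply: (@le_trans _ _ (1 * dl)); last by rewrite mul1r.
  by apply: ler_wpM2r => //; rewrite gerBl exprn_ge0.
rewrite /t; apply: (le_trans (ler_norm_sum _ _ _)); apply: le_trans hK.
by apply: ler_sum => i _; rewrite normrZ ger0_norm.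
Qed.

Lemma tail_sum (R : realType) (eta s : R) (e : nat -> R) N k :
  0 < eta < 1 -> 0 < s -> 1 - eta < s ->
  (forall i, 0 <= e (i + N) <= (s ^+ (i + N))^-1) ->
  \sum_(0 <= i < k) eta * (1 - eta) ^+ (i + N) * e (i + N) <=
  eta * ((1 - eta) / s) ^+ N * (1 - (1 - eta) / s)^-1.
Proof.
move=> /andP[e0 e1] s0 qs he.
have q0 : 0 <= 1 - eta by rewrite subr_ge0 ltW.
have t0 : 0 <= (1 - eta) / s by rewrite divr_ge0 // ltW.
have t1 : (1 - eta) / s < 1 by rewrite ltr_pdivrMr // mul1r.
apply: (@le_trans _ _ (\sum_(0 <= i < k) eta * ((1 - eta) / s) ^+ N * ((1 - eta) / s) ^+ i)).
  apply: ler_sum => i _.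
  rewrite -[X in _ <= X]mulrA -exprD (addnC N i) exprMn exprVn -mulrA; apply: ler_wpM2l; [exact: ltW|]; apply: ler_wpM2l; [exact: exprn_ge0|].
  by case/andP: (he i).
rewrite -mulr_sumr; apply: ler_wpM2l; first by apply: mulr_ge0; [exact: ltW | exact: exprn_ge0].
by apply: geo_le; rewrite t0 t1.
Qed.

Lemma A_bound (R : realType) (eta s : R) (e : nat -> R) N k :
  0 < eta < 1 -> 0 < s -> 1 - eta < s -> (forall n, 0 <= e n) ->
  (forall i, e (i + N) <= (s ^+ (i + N))^-1) ->
  \sum_(0 <= n < k) eta * (1 - eta) ^+ n * e n <=
  \sum_(0 <= n < N) eta * (1 - eta) ^+ n * e n +
  eta * ((1 - eta) / s) ^+ N * (1 - (1 - eta) / s)^-1.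
Proof.
move=> he s0 qs e0 hN; have /andP[eta0 eta1] := he.
have c0 n : 0 <= eta * (1 - eta) ^+ n * e n.
  by rewrite !mulr_ge0 ?exprn_ge0 ?e0 // ?subr_ge0 ltW.
apply: (@le_trans _ _ (\sum_(0 <= n < k + N) eta * (1 - eta) ^+ n * e n)).
  rewrite (big_cat_nat (leq0n k) (leq_addr N k)) /= lerDl.
  by apply: sumr_ge0 => n _.
rewrite (big_cat_nat (leq0n N) (leq_addl k N)) /= lerD2l -{1}(add0n N) big_addn addnK.
by apply: tail_sum => // i; rewrite e0 hN.
Qed.

Lemma bigI_mem (T : Type) (s : seq nat) (A : nat -> set T) w :
  (\big[setI/setT]_(k <- s) A k) w <-> (forall k, k \in s -> A k w).
Proof.
elim: s => [|k s IH]; first by rewrite big_nil; split.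
rewrite big_cons; split.
  move=> [Ak /IH h] j; rewrite in_cons => /orP[/eqP -> //|]; exact: h.
move=> h; split; first by apply: h; rewrite mem_head.
by apply/IH => j js; apply: h; rewrite in_cons js orbT.
Qed.

Lemma bigI_meas d0 (T : measurableType d0) (s : seq nat) (A : nat -> set T) :
  (forall k, measurable (A k)) -> measurable (\big[setI/setT]_(k <- s) A k).
Proof.
move=> hA; elim: s => [|k s IH]; first by rewrite big_nil.
by rewrite big_cons; apply: measurableI.
Qed.


Lemma E_prod d0 (T : measurableType d0) (R : realType) (P : probability T R) (d : nat)
  (X : nat -> T -> 'rV[R]_d) (hi : iid P X) (Bx : set 'rV[R]_d) (hB : borel_Rd Bx) N :
  P (\big[setI/setT]_(k <- iota 0 N) X k @^-1` Bx) =
  (\prod_(k <- iota 0 N) P (X k @^-1` Bx))%E.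
Proof.
by apply: (hi.2.1 (iota 0 N) (fun _ => Bx)) => //; exact: iota_uniq.
Qed.

Lemma E_ind d0 (T : measurableType d0) (R : realType) (P : probability T R) (d : nat)
  (X : nat -> T -> 'rV[R]_d) (hi : iid P X) (Bx : set 'rV[R]_d) (hB : borel_Rd Bx) N n
  (C : set 'rV[R]_d) (hC : borel_Rd C) : (N <= n)%N ->
  P ((\big[setI/setT]_(k <- iota 0 N) X k @^-1` Bx) `&` X n @^-1` C) =
  (P (\big[setI/setT]_(k <- iota 0 N) X k @^-1` Bx) * P (X n @^-1` C))%E.
Proof.
move=> hn.
have := hi.2.1 (rcons (iota 0 N) n) (fun k => if k == n then C else Bx).
rewrite rcons_uniq mem_iota iota_uniq add0n andbT -leqNgt hn /=.
move=> /(_ isT) /(_ (fun k _ => ltac:(by case: (k == n)))).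
have hI : \big[setI/setT]_(j <- iota 0 N) X j @^-1` (if j == n then C else Bx) =
    \big[setI/setT]_(k <- iota 0 N) X k @^-1` Bx.
  apply: eq_big_seq => k; rewrite mem_iota add0n => /andP[_ hk].
  by rewrite ifN // neq_ltn (leq_trans hk hn).
have hp : (\prod_(j <- iota 0 N) P (X j @^-1` (if j == n then C else Bx)) =
    \prod_(k <- iota 0 N) P (X k @^-1` Bx))%E.
  apply: eq_big_seq => k; rewrite mem_iota add0n => /andP[_ hk].
  by rewrite ifN // neq_ltn (leq_trans hk hn).
rewrite big_rcons /= eqxx hI big_rcons /= eqxx hp => ->.
by rewrite E_prod.
Qed.

Lemma tail_prob d0 (T : measurableType d0) (R : realType) (P : probability T R) (d : nat)
  (X : nat -> T -> 'rV[R]_d) (hi : iid P X) e0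
  (he : (\int[P]_w (eucl_norm (X 0%N w))%:E = e0%:E)%E) a n :
  (0 < a)%R -> (P (X n @^-1` [set v | (a <= eucl_norm v)%R]) <= (e0 / a)%:E)%E.
Proof.
move=> a0; have := hi.2.2 n _ (borel_ge _ _ a); rewrite /law => ->.
exact: (@markov_le _ T R P (fun w => eucl_norm (X 0%N w)) a e0 (rv_eucl_meas _ _ _ _ _ (hi.1 0%N)) (fun w => eucl_ge0 _ _ _) a0 he).
Qed.

Lemma E_pos d0 (T : measurableType d0) (R : realType) (P : probability T R) (d : nat)
  (X : nat -> T -> 'rV[R]_d) (hi : iid P X) (x : 'rV[R]_d) (hx : supp (law P (X 0%N)) x) dl N :
  0 < dl -> (0 < P (\big[setI/setT]_(k <- iota 0 N) X k @^-1` ball x dl))%E.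
Proof.
move=> dl0; have hB : borel_Rd (ball x dl) by apply: borel_open; exact: ball_open.
rewrite E_prod //; apply: (big_ind (fun y => 0 < y)%E) => //.
  by move=> y z y0 z0; exact: mule_gt0.
move=> k _; have := hi.2.2 k _ hB; rewrite /law => ->.
by apply: hx; [exact: ball_open | exact: ballxx].
Qed.


Lemma tailP d0 (T : measurableType d0) (R : realType) (P : probability T R) (d : nat)
  (X : nat -> T -> 'rV[R]_d) (hi : iid P X) (e0r s : R) :
  0 < s -> s < 1 -> 0 <= e0r -> forall N (E : set T), measurable E ->
  (forall n, (N <= n)%N -> (P (E `&` X n @^-1` [set v | ((s ^+ n)^-1 <= eucl_norm v)%R]) <=
      P E * (e0r * s ^+ n)%:E)%E) ->
  (P E <= P (E `&` \bigcap_i X (i + N)%N @^-1` [set v | (eucl_norm v < (s ^+ (i + N)%N)^-1)%R]) +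
    P E * (e0r * s ^+ N * (1 - s)^-1)%:E)%E.
Proof.
move=> s0 s1 e00 N E mE hE.
apply: (@tail_bound _ _ _ P _ E _ (fun i => e0r * s ^+ (i + N))) => //.
- by move=> i; apply: (hi.1 (i + N)); exact: borel_lt.
- by move=> i; rewrite mulr_ge0 // exprn_ge0 // ltW.
- move=> i.
  have -> : ~` (X (i + N) @^-1` [set v | eucl_norm v < (s ^+ (i + N))^-1]) =
      X (i + N) @^-1` [set v | (s ^+ (i + N))^-1 <= eucl_norm v].
    by apply/seteqP; split => w /=; rewrite leNgt => /negP.
  by apply: hE; rewrite leq_addl.
- move=> k.
  have -> : \sum_(0 <= i < k) e0r * s ^+ (i + N) = e0r * s ^+ N * \sum_(0 <= i < k) s ^+ i.
    by rewrite mulr_sumr; apply: eq_bigr => i _; rewrite exprD mulrA mulrAC.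
  apply: ler_wpM2l; first by rewrite mulr_ge0 // exprn_ge0 // ltW.
  by apply: geo_le; rewrite s1 ltW.
Qed.

Lemma GA (R : realType) (eta s : R) (e : nat -> R) N :
  0 < eta < 1 -> 0 < s -> 1 - eta < s -> (forall n, 0 <= e n) ->
  (forall i, e (i + N) < (s ^+ (i + N))^-1) ->
  (\sum_(0 <= n <oo) (eta * (1 - eta) ^+ n * e n)%:E < +oo)%E.
Proof.
move=> he s0 qs e0 hN; have /andP[eta0 eta1] := he.
apply: (@le_lt_trans _ _ (\sum_(0 <= n < N) eta * (1 - eta) ^+ n * e n +
  eta * ((1 - eta) / s) ^+ N * (1 - (1 - eta) / s)^-1)%:E); last exact: ltry.
apply: nneseries_le_cst.
  by move=> n; rewrite lee_fin !mulr_ge0 ?exprn_ge0 ?e0 // ?subr_ge0 ltW.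
move=> k; rewrite sumEFin lee_fin; apply: A_bound => // i.
exact: ltW.
Qed.

Theorem lemma6p13 (d0 : measure_display) (T : measurableType d0)
  (R : realType) (P : probability T R) (d : nat) (eta : R)
  (X : nat -> T -> 'rV[R]_d) (chi : T -> 'rV[R]_d) :
  0 < eta < 1 ->
  iid P X ->
  (\int[P]_w (eucl_norm (X 0%N w))%:E < +oo)%E ->
  is_rv_Rd chi ->
  (forall w,
     (\sum_(0 <= n <oo) (eta * (1 - eta) ^+ n * eucl_norm (X n w))%:E < +oo)%E ->
     (fun N => \sum_(0 <= n < N) (eta * (1 - eta) ^+ n) *: X n w) @ \oo
       --> chi w) ->
  let A := [set w | (\sum_(0 <= n <oo)
                       (eta * (1 - eta) ^+ n * eucl_norm (X n w))%:E < +oo)%E] in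
  (measurable A /\ P A = 1%E) /\
  supp (law P (X 0%N)) `<=` supp (law P chi).
Proof.
move=> heta hi hint hchi hconv A.
have /andP[eta0 eta1] := heta.
set q := 1 - eta.
set s := (1 + q) / 2.
have q0 : 0 < q by rewrite subr_gt0.
have q1 : q < 1 by rewrite ltrBlDr ltrDl.
have s0 : 0 < s by rewrite divr_gt0 // addr_gt0.
have s1 : s < 1 by rewrite ltr_pdivrMr // mul1r ltrD2l.
have qs : q < s by rewrite ltr_pdivlMr // mulr_natr mulr2n ltrD2r.
have hint0 : (0 <= \int[P]_w (eucl_norm (X 0%N w))%:E)%E.
  by apply: integral_ge0 => w _; rewrite lee_fin; exact: eucl_ge0.
set e0r := fine (\int[P]_w (eucl_norm (X 0%N w))%:E).
have he : (\int[P]_w (eucl_norm (X 0%N w))%:E = e0r%:E)%E.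
  by rewrite /e0r fineK // ge0_fin_numE.
have e00 : 0 <= e0r by rewrite /e0r fine_ge0.
have GsubA N w : (forall i, eucl_norm (X (i + N)%N w) < (s ^+ (i + N))^-1) -> A w.
  move=> h; rewrite /A /=.
  by apply: (@GA R eta s (fun n => eucl_norm (X n w)) N) => // n; exact: eucl_ge0.
have mA : measurable A.
  have mf : measurable_fun setT (fun w => (\sum_(0 <= n <oo) (eta * (1 - eta) ^+ n * eucl_norm (X n w))%:E)%E).
    have := @ge0_emeasurable_sum _ T R setT (fun n w => (eta * (1 - eta) ^+ n * eucl_norm (X n w))%:E) xpredT.
    apply.
    - by move=> k w _ _; rewrite lee_fin mulr_ge0 ?eucl_ge0 // mulr_ge0 ?exprn_ge0 // ltW.
    - move=> k _; apply/measurable_EFinP; apply: measurable_funM => //.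
      exact: rv_eucl_meas (hi.1 k).
  by rewrite -(setTI A); apply: emeasurable_fun_infty_o.
have mG N : measurable (\bigcap_i X (i + N)%N @^-1` [set v | (eucl_norm v < (s ^+ (i + N)%N)^-1)%R]).
  by apply: bigcapT_measurable => i; apply: (hi.1 (i + N)%N); exact: borel_lt.
have hX n a : (0 < a)%R -> (P (X n @^-1` [set v | (a <= eucl_norm v)%R]) <= (e0r / a)%:E)%E.
  exact: (@tail_prob _ _ _ P _ X hi e0r he).
split.
  split => //.
  apply/eqP; rewrite eq_le probability_le1 //=; apply/lee_addgt0Pr => eps eps0.
  have [N hN] := @ev_small R s (e0r / (1 - s)) eps (ltac:(by rewrite (ltW s0) s1)) eps0.
  have := @tailP _ _ _ P _ X hi e0r s s0 s1 e00 N setT measurableT.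
  rewrite !setTI probability_setT !mul1e => h.
  apply: (le_trans (h _)).
    move=> n _; rewrite setTI mul1e.
    have hp : (0 < s ^- n)%R by rewrite invr_gt0 exprn_gt0.
    by apply: le_trans (hX n _ hp) _; rewrite invrK.
  apply: leeD.
    apply: le_measure; rewrite ?inE //.
    by move=> w /= hw; apply: (GsubA N w) => i; exact: hw.
  by rewrite lee_fin -mulrA [_ * (1 - s)^-1]mulrC mulrA hN.
move=> x hx B oB Bx; rewrite /law.
have [r r0 hrB] : exists2 r, 0 < r & ball x r `<=` B.
  by apply/nbhs_ballP; exact: oB.
set dl := r / 2.
have dl0 : 0 < dl by rewrite divr_gt0.
set t := q / s.
have t0 : 0 <= t by rewrite divr_ge0 // ltW.
have t1 : t < 1 by rewrite ltr_pdivrMr // mul1r.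
have [N1 hN1] := @ev_small R s (e0r / (1 - s)) (1 / 2) (ltac:(by rewrite (ltW s0) s1)) ltac:(by []).
have [N2 hN2] := @ev_small R t (eta / (1 - t)) (r / 8) (ltac:(by rewrite t0 t1)) ltac:(by rewrite divr_gt0).
have [N3 hN3] := @ev_small R q `|x| (r / 8) (ltac:(by rewrite (ltW q0) q1)) ltac:(by rewrite divr_gt0).
set N := (N1 + N2 + N3)%N.
have c1 : e0r * s ^+ N * (1 - s)^-1 <= 1 / 2.
  by rewrite -mulrA [_ * (1 - s)^-1]mulrC mulrA hN1 // /N -addnA leq_addr.
have c2 : eta * t ^+ N * (1 - t)^-1 <= r / 8.
  rewrite -mulrA [_ * (1 - t)^-1]mulrC mulrA hN2 //.
  exact: (leq_trans (leq_addl N1 N2) (leq_addr N3 _)).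
have c3 : q ^+ N * `|x| <= r / 8 by rewrite mulrC hN3 // /N leq_addl.
set E := \big[setI/setT]_(k <- iota 0 N) X k @^-1` ball x dl.
have hBx : borel_Rd (ball x dl) by apply: borel_open; exact: ball_open.
have mE : measurable E by apply: bigI_meas => k; exact: (hi.1 k).
have hpos : (0 < P E)%E by apply: (@E_pos _ _ _ P _ X hi x hx dl N dl0).
have htail := @tailP _ _ _ P _ X hi e0r s s0 s1 e00 N E mE.
have mchi : measurable (chi @^-1` B) by apply: hchi; exact: borel_open.
have {}htail : (P E <= P (E `&` \bigcap_i X (i + N)%N @^-1` [set v | (eucl_norm v < (s ^+ (i + N)%N)^-1)%R]) +
    P E * (e0r * s ^+ N * (1 - s)^-1)%:E)%E.
  apply: htail => n hn.
  rewrite (@E_ind _ _ _ P _ X hi _ hBx N n _ (borel_ge _ _ _) hn).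
  have hp : (0 < s ^- n)%R by rewrite invr_gt0 exprn_gt0.
  apply: lee_pmul => //.
  by apply: le_trans (hX n _ hp) _; rewrite invrK.
set G := \bigcap_i X (i + N)%N @^-1` [set v | (eucl_norm v < (s ^+ (i + N)%N)^-1)%R].
have mEG : measurable (E `&` G) by apply: measurableI => //; exact: mG.
have EGpos : (0 < P (E `&` G))%E.
  rewrite lt_neqAle measure_ge0 // andbT; apply/eqP => h0.
  move: htail; rewrite -h0 add0e.
  have fE : P E \is a fin_num by apply: fin_num_measure.
  move: hpos; rewrite -(fineK fE) -EFinM !lte_fin !lee_fin => pE hle.
  have := ler_wpM2l (ltW pE) c1 => h2.
  lra.
apply: (lt_le_trans EGpos); apply: le_measure; rewrite ?inE //.
move=> w [Ew Gw]; apply: hrB.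
have Aw : A w by apply: (GsubA N w) => i; exact: (Gw i I).
have cv := hconv w Aw.
have r34 : 0 < r * 3 / 4 by rewrite divr_gt0 // mulr_gt0.
have : closed_ball x (r * 3 / 4) (chi w).
  have := @closed_cvg nat _ \oo _ (fun M => \sum_(0 <= n < M) (eta * (1 - eta) ^+ n) *: X n w) (closed_ball x (r * 3 / 4)) (@closed_ball_closed _ _ x (r * 3 / 4)). move=> hh; apply: (hh _ _ _ cv).
  near=> M.
  have NM : (N <= M)%N by near: M; exact: nbhs_infty_ge.
  rewrite closed_ballE // /closed_ball_ /=.
  have hY : forall n, (n < N)%N -> `|x - X n w| <= dl.
    move=> n hn; move/bigI_mem: Ew => /(_ n); rewrite mem_iota add0n hn => /(_ isT).
    by rewrite -ball_normE /ball_ /= => /ltW.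
  have hK := @tail_sum R eta s (fun n => `|X n w|) N (M - N) heta s0 qs.
  have := @SM_bound R d eta dl _ (fun n => X n w) x N M heta NM (ltW dl0) hY (hK _).
  move=> h; apply: (le_trans (h _)).
    by move=> i; rewrite normr_ge0 /=; apply: (le_trans (mx_le_eucl _ _ _)); exact/ltW/(Gw i I).
  rewrite -/q -/t /dl; lra.
rewrite closed_ballE // /closed_ball_ /= => h.
by rewrite -ball_normE /ball_ /=; apply: (le_lt_trans h); lra.
Unshelve. all: by end_near.
Qed.
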